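(* If $\ell\ge 5$ is divisible by three, then the uniform Tur\'an density of the tight $3$-uniform cycle $C_\ell^{(3)}$ is equal to zero.
   Context: For $\ell\ge 5$, the tight $3$-uniform cycle $C_\ell^{(3)}$ is the $3$-uniform hypergraph with $\ell$ vertices $v_1,\ldots,v_\ell$ whose edges are exactly the triples $\{v_i,v_{i+1},v_{i+2}\}$, $i\in[\ell]$, indices modulo $\ell$. For an $n$-vertex $3$-uniform hypergraph $H$ and $\varepsilon>0$, the $\varepsilon$-linear density of $H$ is the minimum edge density of an induced subhypergraph of $H$ with at least $\varepsilon n$ vertices. The uniform Tur\'an density of a $3$-uniform hypergraph $F$ is the supremum of all $d\in[0,1]$ such that for every $\varepsilon>0$ there exist arbitrarily large $F$-free $3$-uniform hypergraphs with $\varepsilon$-linear density at least $d$. *)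

(* Defs.v *)
From HB Require Import structures.
From mathcomp Require Import all_boot all_order all_algebra.
From mathcomp Require Import boolp classical_sets reals.
Set Implicit Arguments. Unset Strict Implicit. Unset Printing Implicit Defensive.
Import Order.TTheory GRing.Theory Num.Theory.

Definition hgraph (n : nat) := {set {set 'I_n}}.

Definition uniform3 (n : nat) (E : hgraph n) : Prop :=
  forall e, e \in E -> #|e| = 3.

Definition contains (n : nat) (H : hgraph n) (m : nat) (F : hgraph m) : Prop :=
  exists f : 'I_m -> 'I_n, injective f /\ forall e, e \in F -> f @: e \in H.

Definition free (m : nat) (F : hgraph m) (n : nat) (H : hgraph n) : Prop :=
  ~ contains H F.

(* Tight 3-uniform cycle on vertices v_0,...,v_{l-1}:
   edges {v_i, v_{i+1}, v_{i+2}}, indices mod l (ordS = cyclic successor). *)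
Definition tight_cycle (l : nat) : hgraph l :=
  [set [set i; ordS i; ordS (ordS i)] | i : 'I_l].

(* Edge density of the induced subhypergraph H[S]:
   #(edges inside S) / C(|S|,3)  (equal to 0 when |S| < 3, by x/0 = 0). *)
Definition induced_density {R : realType} (n : nat) (H : hgraph n) (S : {set 'I_n}) : R :=
  (#|[set e in H | e \subset S]|%:R / 'C(#|S|, 3)%:R)%R.

(* The eps-linear density of H is the minimum edge density of an induced
   subhypergraph on at least eps*n vertices; "eps-linear density >= d" means
   every such induced subhypergraph has density >= d. *)
Definition eps_lin_density_ge {R : realType} (n : nat) (H : hgraph n) (eps d : R) : Prop :=
  forall S : {set 'I_n}, (eps * n%:R <= #|S|%:R)%R -> (d <= induced_density (R:=R) H S)%R.

Definition ut_admissible {R : realType} (m : nat) (F : hgraph m) (d : R) : Prop :=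
  (0 <= d <= 1)%R /\
  forall eps : R, (0 < eps)%R ->
    forall N : nat, exists n : nat, exists H : hgraph n,
      (N <= n)%N /\ uniform3 H /\ free F H /\ eps_lin_density_ge H eps d.

Definition uniform_turan_density (R : realType) (m : nat) (F : hgraph m) : R :=
  sup [set d : R | ut_admissible F d].

(* Main.v *)
Require Import Defs.
From HB Require Import structures.
From mathcomp Require Import all_boot all_order all_algebra.
From mathcomp Require Import zify.
Set Implicit Arguments. Unset Strict Implicit. Unset Printing Implicit Defensive.

Lemma card_sum (T : finType) (A : {set T}) (P : pred T) :
  #|[set x in A | P x]| = \sum_(x in A) (P x : nat).
Proof.
rewrite -sum1dep_card big_mkcondr /=; apply: eq_bigr => x _.
by case: (P x).
Qed.

Lemma card_pair (X Y : finType) (P : X -> Y -> bool) :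
  #|[set t : X * Y | P t.1 t.2]| = \sum_x #|[set y | P x y]|.
Proof.
rewrite -sum1dep_card.
rewrite (eq_bigr (fun x => \sum_(y | P x y) 1)); last by move=> x _; rewrite sum1dep_card.
rewrite pair_big_dep /=. apply: eq_bigl => -[x y] //.
Qed.

Lemma ffact_le n k : n ^_ k <= n ^ k.
Proof.
elim: k => [|k IH]; first by rewrite ffactn0.
rewrite ffactnSr expnSr; apply: leq_mul => //; exact: leq_subr.
Qed.



Lemma ffact_ge n k : (n - k) ^ k <= n ^_ k.
Proof.
elim: k => [|k IH]; first by rewrite ffactn0.
rewrite ffactnSr expnSr; apply: leq_mul; last by lia.
apply: leq_trans IH; case: k => [|k]; first by rewrite !expn0.
rewrite leq_exp2r //; lia.
Qed.

Lemma asym (a k n : nat) : 0 < a -> a * (2 * k + 1) <= n ->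
  'C(n, k) <= (4 * a) ^ k * 'C(n %/ a, k).
Proof.
move=> a0 hn; set D := n %/ a.
have hD : 2 * k + 1 <= D by rewrite /D leq_divRL // mulnC.
have hnD : n <= 2 * a * (D - k).
  have h1 := divn_eq n a; have h2 := ltn_pmod n a0.
  rewrite -/D in h1; nia.
rewrite -(leq_pmul2r (fact_gt0 k)) -mulnA !bin_ffact.
apply: leq_trans (ffact_le n k) _.
apply: (@leq_trans ((4 * a) ^ k * (D - k) ^ k)); last first.
  by apply: leq_mul => //; apply: ffact_ge.
rewrite -expnMn.
clear hn; case: k hD hnD => [|k] hD hnD; first by rewrite !expn0.
rewrite leq_exp2r //; nia.
Qed.

Lemma heavy (Y : finType) (f : Y -> nat) (B c : nat) : 0 < B ->
  (forall y, f y <= B) -> #|Y| * B <= c * \sum_y f y ->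
  #|Y| <= 2 * c * #|[set y | B <= 2 * c * f y]|.
Proof.
move=> B0 fB hs.
rewrite (bigID (fun y => B <= 2 * c * f y)) /= in hs.
set G := [set y | B <= 2 * c * f y].
have h1 : 2 * c * \sum_(y | B <= 2 * c * f y) f y <= 2 * c * #|G| * B.
  rewrite -[2 * c * #|G| * B]mulnA; apply: leq_mul => //.
  rewrite -sum1dep_card big_distrl /=; apply: leq_sum => y _; rewrite mul1n; exact: fB.
have h2 : 2 * c * \sum_(y | ~~ (B <= 2 * c * f y)) f y <= #|Y| * B.
  rewrite big_distrr /=.
  apply: (@leq_trans (\sum_(y | ~~ (B <= 2 * c * f y)) B)).
    apply: leq_sum => y; rewrite -ltnNge; exact: ltnW.
  rewrite sum_nat_const; apply: leq_mul => //; exact: max_card.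
rewrite -(leq_pmul2r B0).
move: hs h1 h2; set s1 := \sum_(y | _) _; set s2 := \sum_(y | _) _.
move=> hs h1 h2.
have hs' : 2 * (#|Y| * B) <= 2 * c * s1 + 2 * c * s2.
  rewrite -mulnDr -mulnA; exact: leq_mul.
lia.
Qed.

Lemma common (X Y : finType) (N : Y -> {set X}) (Ys : {set Y}) (k D : nat) :
  k <= #|X| -> (forall y, y \in Ys -> D <= #|N y|) ->
  exists K : {set X}, #|K| = k /\
    #|Ys| * 'C(D, k) <= 'C(#|X|, k) * #|[set y in Ys | K \subset N y]|.
Proof.
move=> kX hD.
set KS := [set K : {set X} | #|K| == k].
have cKS : #|KS| = 'C(#|X|, k) by rewrite card_draws.
set g := fun K : {set X} => #|[set y in Ys | K \subset N y]|.
have htot : #|Ys| * 'C(D, k) <= \sum_(K in KS) g K.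
  rewrite /g; under eq_bigr => K _ do rewrite card_sum.
  rewrite exchange_big /=.
  rewrite -sum1_card big_distrl /=; apply: leq_sum => y yY.
  rewrite mul1n.
  have -> : \sum_(K in KS) ((K \subset N y) : nat) = #|[set K : {set X} in KS | K \subset N y]|
    by rewrite card_sum.
  have -> : [set K : {set X} in KS | K \subset N y] = [set K : {set X} | K \subset N y & #|K| == k].
    by apply/setP => K; rewrite !inE andbC.
  rewrite cards_draws; apply: leq_bin2l; exact: hD.
have ne : 0 < #|KS| by rewrite cKS bin_gt0.
have [K0 K0in K0max] := eq_bigmax_cond g ne.
exists K0; split; first by move: K0in; rewrite inE => /eqP.
apply: leq_trans htot _; rewrite -cKS; change (\sum_(K in KS) g K <= #|KS| * g K0); rewrite -K0max -sum1_card big_distrl /=.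
apply: leq_sum => K KK; rewrite mul1n; exact: leq_bigmax_cond.
Qed.


Lemma card3E (T : finType) (e : {set T}) : #|e| = 3 -> exists u v w, e = [set u; v; w].
Proof.
move=> h; have : 0 < #|e| by rewrite h.
case/card_gt0P => u ue.
have : #|e :\ u| == 2 by move: h; rewrite (cardsD1 u) ue add1n => -[->].
case/cards2P => v [w [_ hvw]].
exists u, v, w; have -> : e = u |: (e :\ u) by rewrite setD1K.
rewrite hvw.
by apply/setP => x; rewrite !inE orbA.
Qed.

Lemma card3_neq (T : finType) (u v w : T) : #|[set u; v; w]| = 3 ->
  [/\ u != v, v != w & u != w].
Proof.
move=> h; split; apply/eqP => E; subst; move: h.
- have -> : [set v; v; w] = [set v; w] by apply/setP => x; rewrite !inE; case: (x == v); case: (x == w).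
  by rewrite cards2; case: (_ != _).
- have -> : [set u; w; w] = [set u; w] by apply/setP => x; rewrite !inE; case: (x == u); case: (x == w).
  by rewrite cards2; case: (_ != _).
- have -> : [set w; v; w] = [set w; v] by apply/setP => x; rewrite !inE; case: (x == w); case: (x == v).
  by rewrite cards2; case: (_ != _).
Qed.

Lemma set3_perm (T : finType) (a b c : T) :
  [/\ [set a; b; c] = [set b; a; c], [set a; b; c] = [set b; c; a] & [set a; b; c] = [set c; a; b]].
Proof.
by split; apply/setP => x; rewrite !inE; case: (x == a); case: (x == b); case: (x == c).
Qed.

Lemma triples n (H : hgraph n) : uniform3 H ->
  #|H| <= \sum_(y : 'I_n * 'I_n) #|[set w | [set y.1; y.2; w] \in H]|.
Proof.
move=> u3; rewrite -card_pair.
set S := [set t : ('I_n * 'I_n) * 'I_n | _].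
apply: (@leq_trans #|[set [set t.1.1; t.1.2; t.2] | t in S]|); last exact: leq_imset_card.
apply: subset_leq_card; apply/subsetP => e eH.
have [u [v [w E]]] := card3E (u3 e eH).
apply/imsetP; exists ((u, v), w) => //; by rewrite inE /= -E.
Qed.

Lemma kkk (q k : nat) : 0 < q -> 0 < k -> exists N, forall n (H : hgraph n),
  N <= n -> uniform3 H -> 'C(n, 3) <= q * #|H| ->
  exists A B C : {set 'I_n}, [/\ #|A| = k, #|B| = k, #|C| = k &
    forall a b c, a \in A -> b \in B -> c \in C -> [set b; a; c] \in H].
Proof.
move=> q0 k0.
pose c1 := 48 * q. pose a1 := 2 * c1. pose c3 := (4 * a1) ^ k. pose c2 := a1 * c3.
pose a2 := 2 * c2. pose c4 := (4 * a2) ^ k.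
have c1p : 0 < c1 by rewrite /c1; lia.
have a1p : 0 < a1 by rewrite /a1; lia.
have c3p : 0 < c3 by rewrite /c3 expn_gt0; lia.
have c2p : 0 < c2 by rewrite /c2 muln_gt0 a1p c3p.
have a2p : 0 < a2 by rewrite /a2; lia.
have c4p : 0 < c4 by rewrite /c4 expn_gt0; lia.
exists (6 + k + a1 * (2 * k + 1) + a2 * (2 * k + 1) + a2 * c4 * k).
move=> n H hn u3 hC.
have n6 : 6 <= n by lia.
have kn : k <= n by lia.
have hn1 : a1 * (2 * k + 1) <= n by lia.
have hn2 : a2 * (2 * k + 1) <= n by lia.
have hn3 : a2 * c4 * k <= n by lia.
have n0 : 0 < n by lia.
pose Nb := fun y : 'I_n * 'I_n => [set w | [set y.1; y.2; w] \in H].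
have ht := triples u3.
have hT : #|{: 'I_n * 'I_n}| * n <= c1 * \sum_y #|Nb y|.
  rewrite card_prod card_ord.
  have h6 : 'C(n, 3) * 6 = n ^_ 3 by rewrite -bin_ffact.
  have hlow := ffact_ge n 3.
  have h8 : n ^ 3 <= 8 * (n - 3) ^ 3.
    rewrite (_ : 8 = 2 ^ 3) // -expnMn leq_exp2r //; lia.
  have -> : n * n * n = n ^ 3 by rewrite !expnS expn0 muln1 mulnA.
  apply: leq_trans h8 _.
  apply: (@leq_trans (8 * ('C(n, 3) * 6))); first by rewrite leq_mul2l h6 hlow orbT.
  apply: (@leq_trans (48 * (q * #|H|))); first by nia.
  rewrite /c1 -mulnA leq_mul2l; apply/orP; right; rewrite leq_mul2l ht orbT //.
have fB : forall y, #|Nb y| <= n by move=> y; apply: leq_trans (max_card _) _; rewrite card_ord.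
have hG := heavy n0 fB hT.
rewrite card_prod card_ord in hG.
set Good := [set y | n <= 2 * c1 * #|Nb y|] in hG.
pose D1 := n %/ a1.
have hD1 : forall y, y \in Good -> D1 <= #|Nb y|.
  move=> y; rewrite inE => h; rewrite /D1 /a1; apply: leq_trans (leq_div2r _ h) _.
  by rewrite mulKn.
have kX : k <= #|'I_n| by rewrite card_ord.
have [K [cK hK]] := common kX hD1.
rewrite card_ord in hK.
set G' := [set y in Good | K \subset Nb y] in hK.
have hasym := asym a1p hn1.
have kD1 : k <= D1 by rewrite /D1 leq_divRL // mulnC; lia.
have CD1 : 0 < 'C(D1, k) by rewrite bin_gt0.
have hG' : n * n <= c2 * #|G'|.
  rewrite -(leq_pmul2r CD1).
  apply: leq_trans (leq_mul hG (leqnn _)) _.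
  rewrite -mulnA; apply: leq_trans (leq_mul (leqnn _) hK) _.
  apply: leq_trans (leq_mul (leqnn _) (leq_mul hasym (leqnn _))) _.
  rewrite /c2 /c3 /a1 -/D1; nia.
pose Nb2 := fun u : 'I_n => [set v | (u, v) \in G'].
have hsum : \sum_u #|Nb2 u| = #|G'|.
  rewrite /Nb2 -(card_pair (fun u v => (u, v) \in G')).
  have E : [set t : 'I_n * 'I_n | (t.1, t.2) \in G'] = G' by apply/setP => -[u v]; rewrite inE.
  by rewrite -[in RHS]E.
have hT2 : #|'I_n| * n <= c2 * \sum_u #|Nb2 u| by rewrite hsum card_ord.
have fB2 : forall u, #|Nb2 u| <= n by move=> u; apply: leq_trans (max_card _) _; rewrite card_ord.
have hG2 := heavy n0 fB2 hT2.
rewrite card_ord in hG2.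
set Good2 := [set u | n <= 2 * c2 * #|Nb2 u|] in hG2.
pose D2 := n %/ a2.
have hD2 : forall y, y \in Good2 -> D2 <= #|Nb2 y|.
  move=> y; rewrite inE => h; rewrite /D2 /a2; apply: leq_trans (leq_div2r _ h) _.
  by rewrite mulKn.
have [A [cA hA]] := common kX hD2.
rewrite card_ord in hA.
set B' := [set y in Good2 | A \subset Nb2 y] in hA.
have hasym2 := asym a2p hn2.
have kD2 : k <= D2 by rewrite /D2 leq_divRL // mulnC; lia.
have CD2 : 0 < 'C(D2, k) by rewrite bin_gt0.
have hB' : n <= a2 * c4 * #|B'|.
  rewrite -(leq_pmul2r CD2).
  apply: leq_trans (leq_mul hG2 (leqnn _)) _.
  rewrite -mulnA; apply: leq_trans (leq_mul (leqnn _) hA) _.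
  apply: leq_trans (leq_mul (leqnn _) (leq_mul hasym2 (leqnn _))) _.
  rewrite /c4 /a2 -/D2; nia.
have kB' : k <= #|B'|.
  have : a2 * c4 * k <= a2 * c4 * #|B'| by lia.
  by rewrite leq_pmul2l // muln_gt0 a2p c4p.
have : 0 < #|[set X : {set 'I_n} | X \subset B' & #|X| == k]| by rewrite cards_draws bin_gt0.
case/card_gt0P => B; rewrite inE => /andP [sB /eqP cB].
exists A, B, K; split => // a b c aA bB cK'.
have := subsetP sB b bB; rewrite inE => /andP [_ /subsetP hA'].
have := hA' a aA; rewrite inE inE => /andP [_ /subsetP hK'].
by have := hK' c cK'; rewrite inE.
Qed.

Lemma enumP n k (S : {set 'I_n}) : #|S| = k ->
  exists e : 'I_k -> 'I_n, injective e /\ forall j, e j \in S.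
Proof.
move=> hS; exists (fun j => enum_val (cast_ord (esym hS) j)); split.
  by move=> i j /enum_val_inj /cast_ord_inj.
by move=> j; exact: enum_valP.
Qed.

Lemma embed n (H : hgraph n) k (A B C : {set 'I_n}) : uniform3 H ->
  #|A| = k.+1 -> #|B| = k.+1 -> #|C| = k.+1 ->
  (forall a b c, a \in A -> b \in B -> c \in C -> [set b; a; c] \in H) ->
  contains H (tight_cycle (k.+1 * 3)).
Proof.
move=> u3 cA cB cC hE.
have [ea [ieA eaA]] := enumP cA.
have [eb [ieB ebB]] := enumP cB.
have [ec [ieC ecC]] := enumP cC.
have dis : forall a b c, a \in A -> b \in B -> c \in C -> [/\ b != a, a != c & b != c].
  by move=> a b c aA bB cC'; have [] := card3_neq (u3 _ (hE a b c aA bB cC')).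
pose j0 : 'I_k.+1 := ord0.
have dAB : forall j j', ea j != eb j'.
  by move=> j j'; have [h _ _] := dis _ _ _ (eaA j) (ebB j') (ecC j0); rewrite eq_sym.
have dAC : forall j j', ea j != ec j'.
  by move=> j j'; have [_ h _] := dis _ _ _ (eaA j) (ebB j0) (ecC j').
have dBC : forall j j', eb j != ec j'.
  by move=> j j'; have [_ _ h] := dis _ _ _ (eaA j0) (ebB j) (ecC j').
pose g (r : nat) (j : 'I_k.+1) := if r == 0 then ea j else if r == 1 then eb j else ec j.
have ginj : forall r r' j j', r < 3 -> r' < 3 -> g r j = g r' j' -> r = r' /\ j = j'.
  move=> r r' j j'; rewrite /g.
  case: r => [|[|[|r]]] //; case: r' => [|[|[|r']]] //= _ _ E;
    first [by split => //; apply: ieA | by split => //; apply: ieB | by split => //; apply: ieC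
          | move/eqP: E; rewrite ?(negbTE (dAB _ _)) ?(negbTE (dAC _ _)) ?(negbTE (dBC _ _)) //;
            rewrite eq_sym ?(negbTE (dAB _ _)) ?(negbTE (dAC _ _)) ?(negbTE (dBC _ _)) //].
pose l := k.+1 * 3.
pose f (i : 'I_l) := g (i %% 3) (inord (i %/ 3)).
have divlt : forall i : 'I_l, i %/ 3 <= k.
  by move=> i; rewrite -ltnS ltn_divLR //; exact: ltn_ord.
exists f; split.
  move=> i i' /ginj [] //; [exact: ltn_pmod | exact: ltn_pmod | ].
  move=> hr /(congr1 (@nat_of_ord _)); rewrite !inordK ?ltnS ?divlt // => hq.
  by apply: val_inj; rewrite /= (divn_eq i 3) (divn_eq i' 3) hr hq.
move=> e /imsetP [i _ ->].
have -> : f @: [set i; ordS i; ordS (ordS i)] = [set f i; f (ordS i); f (ordS (ordS i))].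
  by rewrite ?imsetU1 ?imsetU ?imset_set1.
have h3 : 3 %| l by rewrite /l dvdn_mull.
have r1 : (ordS i : nat) %% 3 = (i %% 3 + 1) %% 3.
  rewrite /= modn_dvdm // addn1; lia.
have r2 : (ordS (ordS i) : nat) %% 3 = (i %% 3 + 2) %% 3.
  rewrite [X in X %% 3]/= modn_dvdm //; move: r1; lia.
rewrite /f r1 r2.
have := ltn_pmod i (isT : 0 < 3).
case: (i %% 3) => [|[|[|r]]] // _; rewrite /g /=.
- have [-> _ _] := set3_perm (ea (inord (i %/ 3))) (eb (inord (ordS i %/ 3))) (ec (inord (ordS (ordS i) %/ 3))).
  exact: hE.
- have [E1 <- _] := set3_perm (ea (inord (ordS (ordS i) %/ 3))) (eb (inord (i %/ 3))) (ec (inord (ordS i %/ 3))).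
  rewrite E1; exact: hE.
- have [E1 _ <-] := set3_perm (ea (inord (ordS i %/ 3))) (eb (inord (ordS (ordS i) %/ 3))) (ec (inord (i %/ 3))).
  rewrite E1; exact: hE.
Qed.

From mathcomp Require Import boolp classical_sets reals.
Import Order.TTheory GRing.Theory Num.Theory.

Theorem proposition2p2 (R : realType) (l : nat) :
  (5 <= l)%N -> (3 %| l)%N -> uniform_turan_density R (tight_cycle l) = 0%R.
Proof.
move=> l5 /dvdnP [m hm].
have [k hk] : exists k, m = k.+1 by case: m hm => [|k] hm; [subst; lia | exists k].
subst m.
have l0 : (0 < l)%N by lia.
rewrite /uniform_turan_density.
set S := (X in sup X).
have -> : S = [set 0%R]%classic.
  apply/seteqP; split => d; rewrite /S /=.
  - move=> [/andP [d0 d1] hyp].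
    apply/eqP; rewrite eq_le d0 andbT; rewrite leNgt; apply/negP => dpos.
    have idpos : (0 < d^-1)%R by rewrite invr_gt0.
    pose q := Num.Def.archi_bound (d^-1).
    have hq : (d^-1 < q%:R)%R by apply: archi_boundP; exact: ltW.
    have q0 : (0 < q)%N by rewrite -(ltr_nat R); apply: lt_trans hq.
    have [N hN] := kkk q0 (isT : (0 < k.+1)%N).
    have [n [H [Nn [u3 [fr hd]]]]] := hyp 1%R ltr01 (N + 6).
    have := hd [set: 'I_n]%SET; rewrite mul1r cardsT card_ord lexx => /(_ isT).
    rewrite /induced_density cardsT card_ord.
    have -> : [set e in H | e \subset [set: 'I_n]%SET]%SET = H.
      by apply/finset.setP => e; rewrite inE finset.subsetT andbT.
    have Cpos : (0 < 'C(n, 3))%N by rewrite bin_gt0; lia.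
    have CposR : (0 < ('C(n, 3))%:R :> R)%R by rewrite ltr0n.
    rewrite ler_pdivlMr // => hdC.
    have hC : ('C(n, 3) <= q * #|H|)%N.
      rewrite -(ler_nat R) natrM.
      apply: (le_trans _ (ler_wpM2l (ler0n _ _) hdC)).
      rewrite mulrA -[X in (X <= _)%R]mul1r ler_wpM2r // ?ler0n //.
      apply: (le_trans _ (ler_wpM2r (ltW dpos) (ltW hq))); by rewrite mulVf ?lt0r_neq0.
    have [A [B [C [cA cB cC hE]]]] := hN n H ltac:(lia) u3 hC.
    by move: fr; rewrite hm => fr; apply: fr; apply: (embed u3 cA cB cC hE).
  - move=> ->; split; first by rewrite lexx ler01.
    move=> eps _ N; exists N, (@finset.set0 _ : hgraph N); split => //; split.
      by move=> e; rewrite inE.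
    split.
      move=> [f [_ hf]].
      have hin : [set Ordinal l0; ordS (Ordinal l0); ordS (ordS (Ordinal l0))]%SET \in tight_cycle l.
        by apply/imsetP; exists (Ordinal l0).
      by have := hf _ hin; rewrite inE.
    move=> S0 _; rewrite /induced_density; apply: divr_ge0; exact: ler0n.
by rewrite sup1.
Qed.
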